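(* Let $H:\mathbb{R}\to\mathbb{R}$ be a smooth, bounded function with $H(-s)=H(s)\ge 0$ for all $s$, $\int_0^{+\infty} sH(s)\,ds=1$, and such that $H$ either has compact support or $H$ and all its derivatives decay sufficiently fast as $|s|\to\infty$. Let $\zeta:\mathbb{R}\to\mathbb{R}$ be uniformly bounded and smooth with bounded derivative on $\mathbb{R}$, with $\min_{x\in\mathbb{R}}\zeta(x)=\delta_m>0$. Define $\gamma(s,x)=\zeta(x)^{-2}H(s/\zeta(x))$ and $k(x)=\int_0^{+\infty}\gamma(s,x)\,ds$. Let $\psi_0$ be continuous and uniformly bounded on $\mathbb{R}$, piecewise smooth, with a piecewise bounded derivative $\psi_{0x}$ having only finitely many jump discontinuities. Let $u=u(x,t)$ be the solution of $$u_t(x,t)+\int_0^{+\infty}\big[u(x,t)-u(x-s,t)\big]\gamma(s,x)\,ds=0,\quad x\in\mathbb{R},\ t>0,\qquad u(x,0)=\psi_0(x).$$ Then for all $t\in\mathbb{R}^+$ and $x\in\mathbb{R}$, $$[u_x](x,t)=e^{-k(x)t}[u_x](x,0)=e^{-k(x)t}[\psi_{0x}](x).$$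
   Context: For a function $f$ of $x$, $[f](x)=f(x^+)-f(x^-)$ denotes the jump of $f$ at $x$ (difference of right and left limits); $[u_x](x,t)$ is the jump in $x$ of the spatial derivative $u_x(\cdot,t)$. The equation is a nonlocal analogue of $u_t+u_x=0$ with an upwind nonlocal derivative and spatially varying horizon $\zeta(x)$; note $k(x)=\zeta(x)^{-1}\int_0^{+\infty}yH(y)\,dy$. *)

(* Defs.v *)
From Stdlib Require Import Reals List.
From Coquelicot Require Import Coquelicot.
Open Scope R_scope.

Definition is_jump (f : R -> R) (x j : R) : Prop :=
  exists l r : R,
    filterlim f (at_left x) (locally l) /\
    filterlim f (at_right x) (locally r) /\
    j = r - l.

Definition int0inf (f : R -> R) : R :=
  RInt_gen f (at_point 0) (Rbar_locally p_infty).

Definition gamma (H zeta : R -> R) (s x : R) : R :=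
  / (zeta x) ^ 2 * H (s / zeta x).

Definition kfun (H zeta : R -> R) (x : R) : R :=
  int0inf (fun s => gamma H zeta s x).

Definition smooth (f : R -> R) : Prop := forall n x, ex_derive_n f n x.

Definition bdd_fun (f : R -> R) : Prop := exists M, forall x, Rabs (f x) <= M.

(* Main.v *)
Require Import Defs.
From Stdlib Require Import Reals List.
From Coquelicot Require Import Coquelicot.
Open Scope R_scope.

From Stdlib Require Import Lra Psatz.


Lemma pts_avoid (l : list R) (x : R) :
  exists d, 0 < d /\ forall y, 0 < Rabs (y - x) < d -> ~ In y l.
Proof.
  induction l as [|a l IH].
  - exists 1; split; [lra|]. intros y _ H; destruct H.
  - destruct IH as [d [Hd IH]].
    destruct (Req_dec a x) as [Hax|Hax].
    + exists d; split; auto. intros y Hy [Hy'|Hy'].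
      * subst; unfold Rminus in Hy; rewrite Rplus_opp_r, Rabs_R0 in Hy; lra.
      * apply (IH y Hy Hy').
    + exists (Rmin d (Rabs (a - x))); split.
      * apply Rmin_glb_lt; auto. apply Rabs_pos_lt; lra.
      * intros y Hy [Hy'|Hy'].
        -- subst. pose proof (Rmin_r d (Rabs (y - x))); lra.
        -- apply (IH y); auto. pose proof (Rmin_l d (Rabs (a - x))); lra.
Qed.

Lemma norm_R (x : R) : norm x = Rabs x.
Proof. reflexivity. Qed.

Lemma RInt_abs_const (f : R -> R) a b C : a <= b -> ex_RInt f a b ->
  (forall s, a <= s <= b -> Rabs (f s) <= C) -> Rabs (RInt f a b) <= C * (b - a).
Proof.
  intros Hab Hf HC.
  rewrite <- norm_R, Rmult_comm.
  apply (norm_RInt_le_const f a b); auto.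
  exact (RInt_correct f a b Hf).
Qed.

Lemma tail_bound (f : R -> R) a b B : 1 <= a <= b -> ex_RInt f a b ->
  (forall s, a <= s <= b -> Rabs (f s) <= B / (1 + s^2)) -> Rabs (RInt f a b) <= B / a.
Proof.
  intros Hab Hf HB.
  assert (HB0 : 0 <= B).
  { specialize (HB a ltac:(lra)). pose proof (Rabs_pos (f a)).
    assert (0 < 1 + a^2) by nra.
    destruct (Rle_dec 0 B); auto.
    assert (B / (1 + a^2) < 0). { unfold Rdiv. apply Rmult_neg_pos; [lra| apply Rinv_0_lt_compat; lra]. }
    lra. }
  assert (Hg : is_RInt (fun s => B / s^2) a b (minus ((fun s => - B / s) b) ((fun s => - B / s) a))).
  { apply (is_RInt_derive (fun s => - B / s)).
    - intros s Hs. rewrite Rmin_left in Hs by lra. rewrite Rmax_right in Hs by lra.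
      auto_derive; [lra|]. field. lra.
    - intros s Hs. rewrite Rmin_left in Hs by lra. rewrite Rmax_right in Hs by lra.
      apply continuity_pt_filterlim.
      apply continuity_pt_div. apply continuity_pt_const. intros ?; auto.
      apply continuity_pt_mult; [apply continuity_pt_id|].
      apply continuity_pt_mult; [apply continuity_pt_id|apply continuity_pt_const; intros ?; auto].
      simpl. nra. }
  rewrite <- norm_R.
  eapply Rle_trans.
  - apply (norm_RInt_le f (fun s => B / s^2) a b (RInt f a b)); [lra| |exact (RInt_correct f a b Hf)| exact Hg].
    intros s Hs. rewrite norm_R. eapply Rle_trans; [apply HB; auto|].
    apply Rmult_le_compat_l; auto. apply Rinv_le_contravar; nra.
  - simpl. unfold minus, plus, opp; simpl.
    assert (0 < b) by lra.
    assert (B / b >= 0). { unfold Rdiv. apply Rle_ge, Rmult_le_pos; auto. left; apply Rinv_0_lt_compat; lra. }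
    replace (- B / b + - (- B / a)) with (B / a - B / b) by (field; lra). lra.
Qed.


Lemma locally_R (x : R) (P : R -> Prop) :
  (exists d, 0 < d /\ forall y, Rabs (y - x) < d -> P y) -> locally x P.
Proof.
  intros [d [Hd H]]. exists (mkposreal d Hd). intros y Hy. apply H. exact Hy.
Qed.

Lemma locally_R_inv (x : R) (P : R -> Prop) :
  locally x P -> exists d, 0 < d /\ forall y, Rabs (y - x) < d -> P y.
Proof.
  intros [d H]. exists d. split; [apply cond_pos|]. intros y Hy. apply H. exact Hy.
Qed.

Lemma pinfty_R (P : R -> Prop) :
  Rbar_locally p_infty P <-> exists N, forall b, N < b -> P b.
Proof. simpl. tauto. Qed.

Lemma is_RInt_gen_of_lim (f : R -> R) l :
  (forall b, ex_RInt f 0 b) ->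
  filterlim (fun b => RInt f 0 b) (Rbar_locally p_infty) (locally l) ->
  is_RInt_gen f (at_point 0) (Rbar_locally p_infty) l.
Proof.
  intros Hex Hlim P HP.
  exists (fun a => a = 0) (fun b => P (RInt f 0 b)).
  - reflexivity.
  - apply Hlim. exact HP.
  - intros a b -> Hb. exists (RInt f 0 b). split; auto.
    exact (RInt_correct f 0 b (Hex b)).
Qed.

Lemma lim_of_is_RInt_gen (f : R -> R) l :
  is_RInt_gen f (at_point 0) (Rbar_locally p_infty) l ->
  filterlim (fun b => RInt f 0 b) (Rbar_locally p_infty) (locally l).
Proof.
  intros H P HP.
  destruct (H P HP) as [Q R HQ HR HQR].
  unfold filtermap. apply (filter_imp R); auto.
  intros b Hb. destruct (HQR 0 b HQ Hb) as [y [Hy Py]]. simpl in Hy.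
  rewrite (is_RInt_unique _ _ _ _ Hy); auto.
Qed.

Lemma ex_of_is_RInt_gen (f : R -> R) l :
  is_RInt_gen f (at_point 0) (Rbar_locally p_infty) l ->
  exists N, forall b, N < b -> ex_RInt f 0 b.
Proof.
  intros H.
  destruct (H (fun _ => True) (filter_true)) as [Q R HQ HR HQR].
  destruct HR as [N HN]. exists N. intros b Hb.
  destruct (HQR 0 b HQ (HN b Hb)) as [y [Hy _]]. exists y. exact Hy.
Qed.

Lemma lim_bound (g : R -> R) X E :
  filterlim g (Rbar_locally p_infty) (locally X) ->
  (exists N, forall b, N < b -> Rabs (g b) <= E) -> Rabs X <= E.
Proof.
  intros Hl [N HN].
  destruct (Rle_dec (Rabs X) E) as [h|h]; auto. exfalso.
  assert (He : 0 < Rabs X - E) by lra.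
  destruct (Hl (ball X (mkposreal _ He)) (locally_ball X (mkposreal _ He))) as [N' HN'].
  set (b := Rmax N N' + 1).
  assert (h1 := HN b ltac:(unfold b; pose proof (Rmax_l N N'); lra)).
  assert (h2 := HN' b ltac:(unfold b; pose proof (Rmax_r N N'); lra)).
  change (Rabs (g b - X) < Rabs X - E) in h2.
  pose proof (Rabs_triang_inv X (g b)). rewrite <- Rabs_Ropp in h2.
  replace (- (g b - X)) with (X - g b) in h2 by ring. lra.
Qed.

Lemma seq_lim_bound (u : nat -> R) (l E : R) :
  is_lim_seq u l -> (exists N, forall m, (N <= m)%nat -> Rabs (u m) <= E) -> Rabs l <= E.
Proof.
  intros Hl [N HN].
  destruct (Rle_dec (Rabs l) E) as [h|h]; auto. exfalso.
  assert (He : 0 < Rabs l - E) by lra.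
  apply is_lim_seq_spec in Hl. unfold is_lim_seq' in Hl.
  destruct (Hl (mkposreal _ He)) as [N' HN']. simpl in HN'.
  assert (h1 := HN (N + N')%nat ltac:(lia)).
  assert (h2 := HN' (N + N')%nat ltac:(lia)).
  pose proof (Rabs_triang_inv l (u (N+N')%nat)). rewrite <- Rabs_Ropp in h2.
  replace (- (u (N + N')%nat - l)) with (l - u (N+N')%nat) in h2 by ring. lra.
Qed.

Lemma small_N (C eps : R) : 0 <= C -> 0 < eps -> exists N : nat, C / (INR N + 1) < eps.
Proof.
  intros HC He.
  destruct (archimed_cor1 (eps / (C + 1))) as [N [HN HN0]].
  { apply Rdiv_lt_0_compat; lra. }
  exists N. apply lt_INR in HN0. simpl in HN0.
  apply Rle_lt_trans with ((C+1) / INR N).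
  - unfold Rdiv. apply Rmult_le_compat; try lra.
    + left; apply Rinv_0_lt_compat; lra.
    + apply Rinv_le_contravar; lra.
  - replace ((C+1)/INR N) with ((C+1) * / INR N) by reflexivity.
    apply Rmult_lt_compat_l with (r := C+1) in HN; [|lra].
    replace ((C + 1) * (eps / (C + 1))) with eps in HN by (field; lra). lra.
Qed.

Lemma CVU_cauchy (fn : nat -> R -> R) (C : R) :
  (forall n m y, (n <= m)%nat -> Rabs (fn n y - fn m y) <= C / (INR n + 1)) ->
  CVU_dom fn (fun _ => True)
  /\ (forall n y, Rabs (fn n y - Lim_seq (fun m => fn m y)) <= C / (INR n + 1)).
Proof.
  intros H.
  assert (HC : 0 <= C).
  { specialize (H O O 0 (le_n _)). simpl in H. rewrite Rminus_diag, Rabs_R0 in H.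
    replace (C / (0 + 1)) with C in H by field. lra. }
  assert (Hb : forall n y, Rabs (fn n y - Lim_seq (fun m => fn m y)) <= C / (INR n + 1)).
  { intros n y.
    assert (Hc : ex_lim_seq_cauchy (fun m => fn m y)).
    { intros eps. destruct (small_N C eps HC (cond_pos eps)) as [N HN].
      exists N. intros p q Hp Hq.
      assert (HNp : C / (INR p + 1) <= C / (INR N + 1)).
      { unfold Rdiv. apply Rmult_le_compat_l; auto. apply Rinv_le_contravar.
        pose proof (pos_INR N); lra. apply le_INR in Hp; lra. }
      assert (HNq : C / (INR q + 1) <= C / (INR N + 1)).
      { unfold Rdiv. apply Rmult_le_compat_l; auto. apply Rinv_le_contravar.
        pose proof (pos_INR N); lra. apply le_INR in Hq; lra. }
      destruct (Nat.le_ge_cases p q) as [hpq|hpq].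
      - specialize (H p q y hpq). lra.
      - specialize (H q p y hpq). rewrite Rabs_minus_sym in H. lra. }
    apply ex_lim_seq_cauchy_corr in Hc.
    apply Lim_seq_correct' in Hc.
    apply seq_lim_bound with (u := fun m => fn n y - fn m y).
    - apply (is_lim_seq_minus' (fun _ => fn n y) (fun m => fn m y)); auto.
      apply is_lim_seq_const.
    - exists n. intros m Hm. apply H; auto. }
  split; auto.
  intros eps. destruct (small_N C eps HC (cond_pos eps)) as [N HN].
  exists N. intros n Hn y _. eapply Rle_lt_trans; [apply Hb|].
  eapply Rle_lt_trans; [|exact HN].
  unfold Rdiv. apply Rmult_le_compat_l; auto. apply Rinv_le_contravar.
  pose proof (pos_INR N); lra. apply le_INR in Hn; lra.
Qed.


Lemma RInt_diff (f : R -> R) a b : (forall a b, ex_RInt f a b) ->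
  RInt f 0 b - RInt f 0 a = RInt f a b.
Proof.
  intros Hf. rewrite <- (RInt_Chasles f 0 a b); auto.
  change (plus (RInt f 0 a) (RInt f a b)) with (RInt f 0 a + RInt f a b). ring.
Qed.

Lemma ex_lim_decay (f : R -> R) B :
  (forall a b, ex_RInt f a b) ->
  (forall s, 0 <= s -> Rabs (f s) <= B / (1 + s^2)) ->
  exists l, filterlim (fun b => RInt f 0 b) (Rbar_locally p_infty) (locally l).
Proof.
  intros Hex HB.
  assert (Hd : forall u v, 1 <= u <= v -> Rabs (RInt f 0 v - RInt f 0 u) <= B / u).
  { intros u v Huv. rewrite RInt_diff; auto. apply tail_bound; auto.
    intros s Hs; apply HB; lra. }
  assert (HB0 : 0 <= B).
  { specialize (HB 0 (Rle_refl 0)). pose proof (Rabs_pos (f 0)).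
    replace (B / (1 + 0^2)) with B in HB by field. lra. }
  apply (filterlim_locally_cauchy (F := Rbar_locally p_infty)).
  intros eps. exists (fun b => Rmax 1 (2 * B / eps) < b). split.
  - exists (Rmax 1 (2 * B / eps)). auto.
  - intros u v Hu Hv. change (Rabs (RInt f 0 v - RInt f 0 u) < eps).
    pose proof (Rmax_l 1 (2 * B / eps)). pose proof (Rmax_r 1 (2 * B / eps)).
    pose proof (cond_pos eps).
    assert (Hk : forall w, Rmax 1 (2 * B / eps) < w -> B / w < eps).
    { intros w Hw. apply Rmult_lt_reg_r with w; [lra|].
      unfold Rdiv. rewrite Rmult_assoc, Rinv_l by lra.
      assert (2 * B / eps < w) by lra.
      apply Rmult_lt_compat_r with (r := eps) in H2; auto.
      unfold Rdiv in H2. rewrite Rmult_assoc, Rinv_l in H2 by lra. lra. }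
    destruct (Rle_dec u v).
    + eapply Rle_lt_trans; [apply Hd; lra|]. apply Hk; auto.
    + rewrite Rabs_minus_sym. eapply Rle_lt_trans; [apply Hd; lra|]. apply Hk; auto.
Qed.

Lemma RInt_cont2 (F : R -> R -> R -> R) a b p0 q0 : a <= b ->
  (forall p q, ex_RInt (F p q) a b) ->
  (forall eps, 0 < eps -> exists d, 0 < d /\ forall p q s, Rabs (p - p0) < d ->
     Rabs (q - q0) < d -> a <= s <= b -> Rabs (F p q s - F p0 q0 s) <= eps) ->
  continuity_2d_pt (fun p q => RInt (F p q) a b) p0 q0.
Proof.
  intros Hab Hex Hu; unfold continuity_2d_pt; intro eps.
  destruct (Hu (eps / (b - a + 1))) as [d [Hd H]].
  { apply Rdiv_lt_0_compat; [apply cond_pos|lra]. }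
  exists (mkposreal d Hd). intros p q Hp Hq. simpl in Hp, Hq.
  assert (E : RInt (F p q) a b - RInt (F p0 q0) a b = RInt (fun s => F p q s - F p0 q0 s) a b).
  { symmetry. apply (RInt_minus (F p q) (F p0 q0)); auto. }
  rewrite E. eapply Rle_lt_trans.
  apply (RInt_abs_const _ a b (eps / (b - a + 1))); auto.
  apply (ex_RInt_minus (F p q) (F p0 q0)); auto.
  (try (intros s Hs; apply H; auto)).
  pose proof (cond_pos eps).
  assert (0 < eps / (b - a + 1)) by (apply Rdiv_lt_0_compat; lra).
  assert (Heqq : eps / (b - a + 1) * (b - a) = eps - eps / (b - a + 1)) by (field; lra).
  rewrite Heqq. lra.
Qed.

Lemma cont2_sec2 (f : R -> R -> R) x y : continuity_2d_pt f x y ->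
  continuity_pt (fun v => f x v) y.
Proof.
  intros H. apply continuity_pt_locally. intros eps.
  destruct (H eps) as [d Hd]. exists d. intros v Hv. apply Hd; auto.
  rewrite Rminus_diag, Rabs_R0. apply cond_pos.
Qed.

Lemma cont2_sec1 (f : R -> R -> R) x y : continuity_2d_pt f x y ->
  continuity_pt (fun u => f u y) x.
Proof.
  intros H. apply continuity_pt_locally. intros eps.
  destruct (H eps) as [d Hd]. exists d. intros v Hv. apply Hd; auto.
  rewrite Rminus_diag, Rabs_R0. apply cond_pos.
Qed.

Lemma cont_of_cont_pt (f : R -> R) x : continuity_pt f x -> continuous f x.
Proof. intros H. apply continuity_pt_filterlim. exact H. Qed.

Lemma ex_RInt_cont (f : R -> R) a b :
  (forall z, Rmin a b <= z <= Rmax a b -> continuity_pt f z) -> ex_RInt f a b.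
Proof.
  intros H. apply (ex_RInt_continuous (V := R_CompleteNormedModule)).
  intros z Hz. apply cont_of_cont_pt. auto.
Qed.

Lemma RInt_cont1 (D : R -> R -> R) a b y0 : a <= b ->
  (forall y s, continuity_2d_pt D y s) ->
  continuity_pt (fun y => RInt (fun s => D y s) a b) y0.
Proof.
  intros Hab HD.
  assert (Hex : forall y, ex_RInt (fun s => D y s) a b).
  { intros y. apply ex_RInt_cont. intros z _.
    apply cont2_sec2. apply HD. }
  apply (cont2_sec1 (fun p q => RInt (fun s => D p s) a b) y0 0).
  apply (RInt_cont2 (fun p q s => D p s)); auto.
  intros eps Heps.
  destruct (uniform_continuity_2d_1d' D a b y0 (fun x _ => HD y0 x) (mkposreal eps Heps)) as [d Hd].
  exists d. split; [apply cond_pos|]. intros p q s Hp _ Hs.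
  left. apply (Hd s y0 s p); auto.
  - pose proof (cond_pos d); lra.
  - apply Rabs_lt_between' in Hp. lra.
  - rewrite Rminus_diag, Rabs_R0. apply cond_pos.
Qed.


Lemma exd_cont (f : R -> R) x : ex_derive f x -> continuity_pt f x.
Proof.
  intros H. apply continuity_pt_filterlim.
  exact (@ex_derive_continuous R_AbsRing R_NormedModule f x H).
Qed.

Lemma smooth_cont (f : R -> R) : smooth f -> forall r, continuity_pt f r.
Proof.
  intros Hs r. apply exd_cont. exact (Hs 1%nat r).
Qed.

Lemma smooth_derive (f : R -> R) : smooth f -> forall r, ex_derive f r.
Proof. intros Hs r. exact (Hs 1%nat r). Qed.

Lemma smooth_cont' (f : R -> R) : smooth f -> forall r, continuity_pt (Derive f) r.
Proof.
  intros Hs r. apply exd_cont. exact (Hs 2%nat r).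
Qed.

Lemma le_div x c B : 0 < c -> x * c <= B -> x <= B / c.
Proof.
  intros Hc H. apply Rmult_le_reg_r with c; auto. unfold Rdiv.
  rewrite Rmult_assoc, Rinv_l by lra. lra.
Qed.

Lemma H_bounds (H : R -> R) : smooth H -> bdd_fun H ->
  ((exists L, forall s, L < Rabs s -> H s = 0) \/
   (forall (n m : nat), exists C, forall s, Rabs (s ^ m * Derive_n H n s) <= C)) ->
  exists B, 0 < B /\ forall r, Rabs (H r) <= B / (1 + r^2) /\
     Rabs (Derive H r) * (1 + Rabs r) <= B / (1 + r^2).
Proof.
  intros Hs [C HC] [[L HL]|Hd].
  - set (L1 := Rabs L).
    assert (HL1 : forall s, L1 < Rabs s -> H s = 0).
    { intros s Hs'. apply HL. unfold L1 in Hs'. pose proof (Rle_abs L). lra. }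
    assert (HL0 : 0 <= L1) by apply Rabs_pos.
    destruct (continuity_ab_maj (fun r => Rabs (Derive H r)) (-L1) L1 ltac:(lra)) as [Mx [HMx _]].
    { intros c _. apply continuity_pt_filterlim.
      apply (continuous_comp (Derive H) Rabs). apply continuity_pt_filterlim.
      apply smooth_cont'; auto. apply continuous_Rabs. }
    set (D1 := Rabs (Derive H Mx)).
    assert (HC0 : 0 <= C). { pose proof (HC 0). pose proof (Rabs_pos (H 0)). lra. }
    assert (HD0 : 0 <= D1) by apply Rabs_pos.
    exists (C * (1 + L1^2) + D1 * ((1 + L1) * (1 + L1^2)) + 1). split.
    { assert (0 <= C * (1 + L1^2)) by (apply Rmult_le_pos; nra).
      assert (0 <= D1 * ((1 + L1) * (1 + L1^2))) by (apply Rmult_le_pos; nra). lra. }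
    intros r.
    assert (Hr2 : 0 < 1 + r^2) by nra.
    destruct (Rle_dec (Rabs r) L1) as [Hr|Hr].
    + assert (r2 : r^2 <= L1^2). { rewrite <- (pow2_abs r). apply pow_incr. split; auto. apply Rabs_pos. }
      split.
      * apply le_div; auto.
        assert (Rabs (H r) * (1 + r^2) <= C * (1 + L1^2)).
        { apply Rmult_le_compat; try nra. apply Rabs_pos. apply HC. }
        assert (0 <= D1 * ((1 + L1) * (1 + L1^2))) by (apply Rmult_le_pos; nra). lra.
      * apply le_div; auto.
        assert (HDr : Rabs (Derive H r) <= D1).
        { apply HMx. apply Rabs_le_between in Hr; lra. }
        assert (Rabs (Derive H r) * (1 + Rabs r) * (1 + r^2) <= D1 * ((1 + L1) * (1 + L1^2))).
        { rewrite Rmult_assoc. pose proof (Rabs_pos r). pose proof (Rabs_pos (Derive H r)).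
          assert ((1 + Rabs r) * (1 + r^2) <= (1 + L1) * (1 + L1^2)) by (apply Rmult_le_compat; nra).
          apply Rmult_le_compat; nra. }
        assert (0 <= C * (1 + L1^2)) by (apply Rmult_le_pos; nra). lra.
    + assert (Hr' : L1 < Rabs r) by lra.
      assert (HD : Derive H r = 0).
      { rewrite (Derive_ext_loc H (fun _ => 0)). apply Derive_const.
        apply locally_R. exists (Rabs r - L1). split; [lra|].
        intros y Hy. apply HL1. pose proof (Rabs_triang_inv r (r - y)).
        replace (r - (r - y)) with y in H0 by ring. rewrite Rabs_minus_sym in Hy.
        lra. }
      rewrite HD, (HL1 r Hr'), Rabs_R0, Rmult_0_l.
      assert (0 < (C * (1 + L1^2) + D1 * ((1 + L1) * (1 + L1^2)) + 1) / (1 + r^2)).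
      { apply Rdiv_lt_0_compat; auto.
        assert (0 <= C * (1 + L1^2)) by (apply Rmult_le_pos; nra).
        assert (0 <= D1 * ((1 + L1) * (1 + L1^2))) by (apply Rmult_le_pos; nra). lra. }
      lra.
  - destruct (Hd 0%nat 0%nat) as [C00 H00].
    destruct (Hd 0%nat 2%nat) as [C02 H02].
    destruct (Hd 1%nat 0%nat) as [C10 H10].
    destruct (Hd 1%nat 1%nat) as [C11 H11].
    destruct (Hd 1%nat 2%nat) as [C12 H12].
    destruct (Hd 1%nat 3%nat) as [C13 H13].
    simpl in H00, H02, H10, H11, H12, H13.
    assert (P0 : 0 <= C00) by (eapply Rle_trans; [apply Rabs_pos|apply (H00 0)]).
    assert (P1 : 0 <= C02) by (eapply Rle_trans; [apply Rabs_pos|apply (H02 0)]).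
    assert (P2 : 0 <= C10) by (eapply Rle_trans; [apply Rabs_pos|apply (H10 0)]).
    assert (P3 : 0 <= C11) by (eapply Rle_trans; [apply Rabs_pos|apply (H11 0)]).
    assert (P4 : 0 <= C12) by (eapply Rle_trans; [apply Rabs_pos|apply (H12 0)]).
    assert (P5 : 0 <= C13) by (eapply Rle_trans; [apply Rabs_pos|apply (H13 0)]).
    exists (C00 + C02 + C10 + C11 + C12 + C13 + 1). split; [lra|].
    intros r.
    assert (Hr2 : 0 < 1 + r^2) by nra.
    specialize (H00 r); specialize (H02 r); specialize (H10 r); specialize (H11 r);
    specialize (H12 r); specialize (H13 r).
    repeat rewrite Rmult_1_r in H00; repeat rewrite Rabs_mult in H00; repeat rewrite Rabs_R1 in H00; repeat rewrite Rmult_1_l in H00.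
    repeat rewrite Rmult_1_r in H02; repeat rewrite Rabs_mult in H02; repeat rewrite Rabs_R1 in H02; repeat rewrite Rmult_1_l in H02.
    repeat rewrite Rmult_1_r in H10; repeat rewrite Rabs_mult in H10; repeat rewrite Rabs_R1 in H10; repeat rewrite Rmult_1_l in H10.
    repeat rewrite Rmult_1_r in H11; repeat rewrite Rabs_mult in H11; repeat rewrite Rabs_R1 in H11; repeat rewrite Rmult_1_l in H11.
    repeat rewrite Rmult_1_r in H12; repeat rewrite Rabs_mult in H12; repeat rewrite Rabs_R1 in H12; repeat rewrite Rmult_1_l in H12.
    repeat rewrite Rmult_1_r in H13; repeat rewrite Rabs_mult in H13; repeat rewrite Rabs_R1 in H13; repeat rewrite Rmult_1_l in H13.
    set (a := Rabs r) in *. set (h := Rabs (H r)) in *. set (d := Rabs (Derive H r)) in *.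
    assert (ha : 0 <= a) by apply Rabs_pos.
    assert (hh : 0 <= h) by apply Rabs_pos.
    assert (hd : 0 <= d) by apply Rabs_pos.
    assert (r2 : r^2 = a * a). { unfold a. rewrite <- (pow2_abs r). ring. }
    split; apply le_div; auto; rewrite r2; nra.
Qed.


Lemma cont2_comp (f g1 g2 : R -> R -> R) y z :
  continuity_2d_pt f (g1 y z) (g2 y z) -> continuity_2d_pt g1 y z ->
  continuity_2d_pt g2 y z -> continuity_2d_pt (fun a b => f (g1 a b) (g2 a b)) y z.
Proof.
  intros Hf H1 H2 eps.
  destruct (Hf eps) as [d Hd].
  destruct (H1 d) as [d1 Hd1]. destruct (H2 d) as [d2 Hd2].
  assert (h : 0 < Rmin d1 d2) by (apply Rmin_glb_lt; apply cond_pos).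
  exists (mkposreal _ h). intros u v Hu Hv. simpl in Hu, Hv.
  pose proof (Rmin_l d1 d2). pose proof (Rmin_r d1 d2).
  apply Hd.
  - apply Hd1; lra.
  - apply Hd2; lra.
Qed.

Lemma cont2_1d_1 (f : R -> R) y z : continuity_pt f y -> continuity_2d_pt (fun a b => f a) y z.
Proof.
  intros H. apply (continuity_1d_2d_pt_comp f (fun a b => a)); auto.
  apply continuity_2d_pt_id1.
Qed.

Lemma cont2_1d_2 (f : R -> R) y z : continuity_pt f z -> continuity_2d_pt (fun a b => f b) y z.
Proof.
  intros H. apply (continuity_1d_2d_pt_comp f (fun a b => b)); auto.
  apply continuity_2d_pt_id2.
Qed.

Lemma scal_R (a b : R) : scal a b = a * b.
Proof. reflexivity. Qed.
Lemma opp_R (a : R) : opp a = - a.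
Proof. reflexivity. Qed.
Lemma plus_R (a b : R) : plus a b = a + b.
Proof. reflexivity. Qed.
Lemma minus_R (a b : R) : minus a b = a - b.
Proof. reflexivity. Qed.

Lemma RInt_opp_R (g : R -> R) a b : ex_RInt g a b -> RInt (fun x => - g x) a b = - RInt g a b.
Proof. intros H. exact (RInt_opp g a b H). Qed.

Lemma opp_RInt_swap_R (g : R -> R) a b : ex_RInt g a b -> - RInt g a b = RInt g b a.
Proof. intros H. exact (opp_RInt_swap g a b H). Qed.

Lemma ex_RInt_shift (f : R -> R) y N : (forall a b, ex_RInt f a b) ->
  ex_RInt (fun s => f (y - s)) 0 N.
Proof.
  intros Hf.
  assert (H1 : ex_RInt (fun s => scal (-1) (f (-1 * s + y))) 0 N).
  { apply (ex_RInt_comp_lin f (-1) y 0 N). apply Hf. }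
  apply (ex_RInt_opp (V := R_NormedModule)) in H1.
  revert H1. apply ex_RInt_ext.
  intros s _. change (- (-1 * f (-1 * s + y)) = f (y - s)).
  replace (-1 * s + y) with (y - s) by ring. ring.
Qed.

Lemma RInt_shift (f : R -> R) y N : (forall a b, ex_RInt f a b) ->
  RInt (fun s => f (y - s)) 0 N = RInt f (y - N) y.
Proof.
  intros Hf.
  assert (E := RInt_comp_lin f (-1) y 0 N).
  replace (-1 * 0 + y) with y in E by ring.
  replace (-1 * N + y) with (y - N) in E by ring.
  rewrite <- (opp_RInt_swap_R f y (y - N)) by auto.
  rewrite <- E by auto.
  rewrite (RInt_ext (fun y0 => scal (-1) (f (-1 * y0 + y))) (fun s => - (f (y - s)))).
  2:{ intros s _. change (-1 * f (-1 * s + y) = - f (y - s)).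
       replace (-1 * s + y) with (y - s) by ring. ring. }
  rewrite RInt_opp_R by (apply ex_RInt_shift; auto).
  symmetry; apply Ropp_involutive.
Qed.

Lemma UC_conv (w : R -> R -> R) (k : R -> R -> R) M Kb y0 t0 A :
  0 <= A ->
  (forall z tau, continuity_2d_pt w z tau) -> (forall z tau, Rabs (w z tau) <= M) ->
  (forall y s, continuity_2d_pt k y s) -> (forall y s, Rabs (k y s) <= Kb) ->
  forall eps, 0 < eps -> exists d, 0 < d /\ forall p q s, Rabs (p - y0) < d ->
    Rabs (q - t0) < d -> 0 <= s <= A ->
    Rabs (w (p - s) q * k p s - w (y0 - s) t0 * k y0 s) <= eps.
Proof.
  intros HA Hw HM Hk HK eps Heps.
  assert (M0 : 0 <= M) by (eapply Rle_trans; [apply Rabs_pos|apply (HM 0 0)]).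
  assert (K0 : 0 <= Kb) by (eapply Rle_trans; [apply Rabs_pos|apply (HK 0 0)]).
  assert (e1p : 0 < eps / (2 * (Kb + 1))) by (apply Rdiv_lt_0_compat; lra).
  assert (e2p : 0 < eps / (2 * (M + 1))) by (apply Rdiv_lt_0_compat; lra).
  destruct (uniform_continuity_2d w (y0 - A - 1) (y0 + 1) (t0 - 1) (t0 + 1)
     (fun x y _ _ => Hw x y) (mkposreal _ e1p)) as [d1 Hd1].
  destruct (uniform_continuity_2d k (y0 - 1) (y0 + 1) 0 A
     (fun x y _ _ => Hk x y) (mkposreal _ e2p)) as [d2 Hd2].
  set (d := Rmin (Rmin d1 d2) 1).
  assert (dp : 0 < d).
  { unfold d. apply Rmin_glb_lt; [apply Rmin_glb_lt; apply cond_pos|lra]. }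
  exists d. split; auto.
  intros p q s Hp Hq Hs.
  assert (h1 : d <= d1) by (unfold d; eapply Rle_trans; [apply Rmin_l|apply Rmin_l]).
  assert (h2 : d <= d2) by (unfold d; eapply Rle_trans; [apply Rmin_l|apply Rmin_r]).
  assert (h3 : d <= 1) by (unfold d; apply Rmin_r).
  apply Rabs_lt_between' in Hp. apply Rabs_lt_between' in Hq.
  assert (A1 : Rabs (w (p - s) q - w (y0 - s) t0) < eps / (2 * (Kb + 1))).
  { apply (Hd1 (y0 - s) t0 (p - s) q); try lra.
    - replace (p - s - (y0 - s)) with (p - y0) by ring. apply Rabs_lt_between'; lra.
    - apply Rabs_lt_between'; lra. }
  assert (A2 : Rabs (k p s - k y0 s) < eps / (2 * (M + 1))).
  { apply (Hd2 y0 s p s); try lra.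
    - apply Rabs_lt_between'; lra.
    - rewrite Rminus_diag, Rabs_R0. apply cond_pos. }
  replace (w (p - s) q * k p s - w (y0 - s) t0 * k y0 s) with
    ((w (p - s) q - w (y0 - s) t0) * k p s + w (y0 - s) t0 * (k p s - k y0 s)) by ring.
  eapply Rle_trans; [apply Rabs_triang|]. rewrite !Rabs_mult.
  assert (B1 : Rabs (w (p - s) q - w (y0 - s) t0) * Rabs (k p s) <= eps / (2 * (Kb + 1)) * Kb).
  { apply Rmult_le_compat; try apply Rabs_pos; try lra. apply HK. }
  assert (B2 : Rabs (w (y0 - s) t0) * Rabs (k p s - k y0 s) <= M * (eps / (2 * (M + 1)))).
  { apply Rmult_le_compat; try apply Rabs_pos; try lra. apply HM. }
  assert (C1 : eps / (2 * (Kb + 1)) * Kb <= eps / 2).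
  { apply Rle_trans with (eps / (2 * (Kb + 1)) * (Kb + 1)). apply Rmult_le_compat_l; lra.
    right; field; lra. }
  assert (C2 : M * (eps / (2 * (M + 1))) <= eps / 2).
  { apply Rle_trans with ((M + 1) * (eps / (2 * (M + 1)))). apply Rmult_le_compat_r; lra.
    right; field; lra. }
  lra.
Qed.

Lemma is_derive_eq (f : R -> R) x l l' : is_derive f x l -> l = l' -> is_derive f x l'.
Proof. intros H ->. exact H. Qed.

Lemma derive_conv (w : R -> R) (k kd : R -> R -> R) N y :
  (forall z, continuity_pt w z) -> (forall a s, continuity_2d_pt k a s) ->
  (forall z a, is_derive (fun a => k a (a - z)) a (kd a (a - z))) ->
  (forall a s, continuity_2d_pt kd a s) ->
  is_derive (fun a => RInt (fun s => w (a - s) * k a s) 0 N) y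
    (RInt (fun s => w (y - s) * kd y s) 0 N + w y * k y 0 - w (y - N) * k y N).
Proof.
  intros Hw Hk Hkd Hkdc.
  set (f := fun a z => w z * k a (a - z)).
  assert (Hsub : forall a z, continuity_2d_pt (fun a z => a - z) a z).
  { intros a z. apply continuity_2d_pt_minus; [apply continuity_2d_pt_id1|apply continuity_2d_pt_id2]. }
  assert (Hfc : forall a z, continuity_2d_pt f a z).
  { intros a z. unfold f. apply continuity_2d_pt_mult.
    apply cont2_1d_2; auto.
    apply (cont2_comp k (fun a z => a) (fun a z => a - z)); auto. apply continuity_2d_pt_id1. }
  assert (Hex : forall a b c, ex_RInt (f a) b c).
  { intros a b c. apply ex_RInt_cont. intros z _. apply (cont2_sec2 f). auto. }
  assert (Hd : forall a z, is_derive (fun u => f u z) a (w z * kd a (a - z))).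
  { intros a z. unfold f.
    apply (is_derive_ext (fun u => scal (w z) (k u (u - z)))). { intros; reflexivity. }
    apply (is_derive_scal (fun u => k u (u - z))). apply Hkd. }
  assert (HD : forall a z, Derive (fun u => f u z) a = w z * kd a (a - z)).
  { intros a z. apply is_derive_unique. apply Hd. }
  assert (Hdc : forall a z, continuity_2d_pt (fun u v => Derive (fun z => f z v) u) a z).
  { intros a z. apply continuity_2d_pt_ext with (f := fun u v => w v * kd u (u - v)).
    { intros; symmetry; apply HD. }
    apply continuity_2d_pt_mult. apply cont2_1d_2; auto.
    apply (cont2_comp kd (fun a z => a) (fun a z => a - z)); auto. apply continuity_2d_pt_id1. }
  apply (is_derive_ext (fun a => RInt (f a) (a - N) a)).
  { intros a. rewrite <- RInt_shift by auto. apply RInt_ext. intros s _. unfold f.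
    replace (a - (a - s)) with s by ring. reflexivity. }
  eapply is_derive_eq.
  apply (is_derive_RInt_param_bound_comp f (fun a => a - N) (fun a => a) y 1 1).
  - apply filter_forall. intros; apply Hex.
  - exists (mkposreal 1 Rlt_0_1). apply filter_forall. intros; apply Hex.
  - exists (mkposreal 1 Rlt_0_1). apply filter_forall. intros; apply Hex.
  - first [apply is_derive_id | (eapply is_derive_eq; [apply (is_derive_minus (fun a => a) (fun _ => N)); [apply is_derive_id|apply is_derive_const] | change (1 - 0 = 1); ring])].
  - exact (@is_derive_id R_AbsRing y).
  - exists (mkposreal 1 Rlt_0_1). apply filter_forall. intros a z _. eexists. apply Hd.
  - intros; apply Hdc.
  - exists (mkposreal 1 Rlt_0_1). intros; apply Hdc.
  - exists (mkposreal 1 Rlt_0_1). intros; apply Hdc.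
  - apply (cont2_sec2 f). auto.
  - apply (cont2_sec2 f). auto.
  - rewrite (RInt_ext (fun t => Derive (fun u => f u t) y) (fun z => w z * kd y (y - z))).
    2:{ intros; apply HD. }
    rewrite <- (RInt_shift (fun z => w z * kd y (y - z))).
    2:{ intros a b. apply ex_RInt_cont. intros z _.
        apply (cont2_sec2 (fun u v => w v * kd u (u - v))).
        apply continuity_2d_pt_mult. apply cont2_1d_2; auto.
        apply (cont2_comp kd (fun a z => a) (fun a z => a - z)); auto. apply continuity_2d_pt_id1. }
    rewrite (RInt_ext (fun s => w (y - s) * kd y (y - (y - s))) (fun s => w (y - s) * kd y s)).
    2:{ intros s _. replace (y - (y - s)) with s by ring. reflexivity. }
    unfold f. replace (y - (y - N)) with N by ring. replace (y - y) with 0 by ring. match goal with |- ?a = ?b => change (@eq R a b) end. ring.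
Qed.


Definition G1 (H zeta : R -> R) (y s : R) : R :=
  -2 * Derive zeta y / (zeta y)^3 * H (s / zeta y)
  + Derive H (s / zeta y) * (zeta y - s * Derive zeta y) / (zeta y)^4.

Lemma gam_derive (H zeta : R -> R) : smooth H -> smooth zeta -> (forall y, 0 < zeta y) ->
  forall z a, is_derive (fun a => gamma H zeta (a - z) a) a (G1 H zeta a (a - z)).
Proof.
  intros HH Hz Hpos z a. unfold gamma, G1.
  assert (hz := Hpos a).
  auto_derive.
  all: repeat split; try apply smooth_derive; auto.
  all: try (apply Rgt_not_eq; nra).
  change (Derive (fun x => zeta x)) with (Derive zeta).
  change (Derive (fun x => H x)) with (Derive H).
  unfold Rminus, Rdiv. field. lra.
Qed.

Lemma c2_z (f : R -> R) : (forall r, continuity_pt f r) -> forall a s, continuity_2d_pt (fun a s => f a) a s.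
Proof. intros Hf a s. apply cont2_1d_1. auto. Qed.

Lemma c2_Hr (f zeta : R -> R) : (forall r, continuity_pt f r) -> (forall r, continuity_pt zeta r) ->
  (forall y, 0 < zeta y) -> forall a s, continuity_2d_pt (fun a s => f (s / zeta a)) a s.
Proof.
  intros Hf Hz Hp a s.
  apply (continuity_1d_2d_pt_comp f (fun a s => s / zeta a)); auto.
  apply continuity_2d_pt_mult. apply continuity_2d_pt_id2.
  apply continuity_2d_pt_inv. apply c2_z; auto. specialize (Hp a); lra.
Qed.

Lemma gamma_cont (H zeta : R -> R) : smooth H -> smooth zeta -> (forall y, 0 < zeta y) ->
  forall a s, continuity_2d_pt (fun a s => gamma H zeta s a) a s.
Proof.
  intros HH Hz Hp a s. unfold gamma.
  apply continuity_2d_pt_mult.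
  - apply continuity_2d_pt_inv.
    + apply continuity_2d_pt_ext with (f := fun a s => zeta a * (zeta a * 1)).
      { intros; simpl; ring. }
      apply continuity_2d_pt_mult. apply c2_z. apply smooth_cont; auto.
      apply continuity_2d_pt_mult. apply c2_z. apply smooth_cont; auto. apply continuity_2d_pt_const.
    + specialize (Hp a). apply pow_nonzero. lra.
  - apply c2_Hr; auto; apply smooth_cont; auto.
Qed.

Lemma G1_cont (H zeta : R -> R) : smooth H -> smooth zeta -> (forall y, 0 < zeta y) ->
  forall a s, continuity_2d_pt (fun a s => G1 H zeta a s) a s.
Proof.
  intros HH Hz Hp a s. unfold G1.
  assert (cz := c2_z zeta (smooth_cont zeta Hz)).
  assert (czd := c2_z (Derive zeta) (smooth_cont' zeta Hz)).
  assert (cpow : forall n a s, continuity_2d_pt (fun a s => (zeta a)^n) a s).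
  { induction n; intros a' s'; simpl. apply continuity_2d_pt_const.
    apply continuity_2d_pt_mult; auto. }
  assert (cinv : forall n a s, continuity_2d_pt (fun a s => / (zeta a)^n) a s).
  { intros n a' s'. apply continuity_2d_pt_inv; auto. apply pow_nonzero. specialize (Hp a'); lra. }
  apply continuity_2d_pt_plus.
  - apply continuity_2d_pt_mult.
    + apply continuity_2d_pt_mult. apply continuity_2d_pt_mult. apply continuity_2d_pt_const. auto. auto.
    + apply c2_Hr; auto; apply smooth_cont; auto.
  - apply continuity_2d_pt_mult; auto.
    apply continuity_2d_pt_mult.
    + apply c2_Hr; auto. apply smooth_cont'; auto. apply smooth_cont; auto.
    + apply continuity_2d_pt_minus; auto. apply continuity_2d_pt_mult; auto. apply continuity_2d_pt_id2.
Qed.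

Lemma r_bnd (zy s Z X : R) : 0 < zy <= Z -> 0 <= X ->
  X / (1 + (s / zy)^2) <= X * (1 + Z^2) / (1 + s^2).
Proof.
  intros Hz HX.
  assert (h1 : 0 < 1 + (s / zy)^2) by nra.
  assert (h2 : 0 < 1 + s^2) by nra.
  assert (key : 1 + s^2 <= (1 + Z^2) * (1 + (s / zy)^2)).
  { assert (e : (s / zy)^2 = s^2 / zy^2) by (field; lra). rewrite e.
    assert (hzz : 0 < zy^2) by nra.
    apply Rmult_le_reg_r with (zy^2); auto.
    replace ((1 + Z ^ 2) * (1 + s ^ 2 / zy ^ 2) * zy ^ 2) with ((1 + Z^2) * (zy^2 + s^2)) by (field; lra).
    assert (zy^2 <= Z^2) by nra. nra. }
  unfold Rdiv. rewrite Rmult_assoc. apply Rmult_le_compat_l; auto.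
  apply Rmult_le_reg_r with (1 + s^2); auto.
  rewrite Rmult_assoc, Rinv_l by lra.
  apply Rmult_le_reg_l with (1 + (s / zy)^2); auto.
  rewrite <- Rmult_assoc, Rinv_r by lra. lra.
Qed.

Lemma gam_bound (H zeta : R -> R) B dl Z :
  0 < dl -> (forall y, dl <= zeta y <= Z) ->
  (forall r, Rabs (H r) <= B / (1 + r^2)) -> 0 <= B ->
  forall s y, Rabs (gamma H zeta s y) <= B * (1 + Z^2) / dl^2 / (1 + s^2).
Proof.
  intros Hdl Hz HB HB0 s y. unfold gamma.
  destruct (Hz y) as [h1 h2].
  rewrite Rabs_mult, Rabs_inv, <- RPow_abs, (Rabs_pos_eq (zeta y)) by lra.
  assert (hr := r_bnd (zeta y) s Z B ltac:(lra) HB0).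
  assert (hH := HB (s / zeta y)).
  assert (hs : 0 < 1 + s^2) by nra.
  assert (hz2 : dl^2 <= zeta y ^2) by (apply pow_incr; lra).
  assert (hd2 : 0 < dl^2) by nra.
  apply Rle_trans with (/ dl^2 * (B * (1 + Z^2) / (1 + s^2))).
  - apply Rmult_le_compat. left; apply Rinv_0_lt_compat; nra. apply Rabs_pos.
    apply Rinv_le_contravar; auto. lra.
  - right. field. lra.
Qed.

Lemma G1_bound (H zeta : R -> R) B dl Z Z1 :
  0 < dl -> (forall y, dl <= zeta y <= Z) -> (forall y, Rabs (Derive zeta y) <= Z1) ->
  (forall r, Rabs (H r) <= B / (1 + r^2) /\ Rabs (Derive H r) * (1 + Rabs r) <= B / (1 + r^2)) ->
  0 <= B ->
  forall y s, Rabs (G1 H zeta y s) <= (3 * Z1 + 1) * (B * (1 + Z^2)) / dl^3 / (1 + s^2).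
Proof.
  intros Hdl Hz HZ1 HB HB0 y s.
  destruct (Hz y) as [h1 h2].
  set (zy := zeta y) in *. set (zd := Derive zeta y). set (r := s / zy).
  assert (Z10 : 0 <= Z1) by (eapply Rle_trans; [apply Rabs_pos|apply (HZ1 0)]).
  assert (E : G1 H zeta y s = / zy^3 * (-2 * zd * H r + Derive H r * (1 - r * zd))).
  { unfold G1. fold zy zd r. unfold r. field. lra. }
  rewrite E.
  set (X := B / (1 + r^2)).
  assert (hX : X <= B * (1 + Z^2) / (1 + s^2)) by (apply r_bnd; lra).
  destruct (HB r) as [hH hD]. fold X in hH, hD.
  assert (hzd : Rabs zd <= Z1) by apply HZ1.
  assert (inner : Rabs (-2 * zd * H r + Derive H r * (1 - r * zd)) <= (3 * Z1 + 1) * X).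
  { eapply Rle_trans; [apply Rabs_triang|]. rewrite !Rabs_mult.
    assert (e2 : Rabs (-2) = 2) by (unfold Rabs; destruct (Rcase_abs (-2)); lra). rewrite e2.
    assert (h1' : Rabs (1 - r * zd) <= (1 + Z1) * (1 + Rabs r)).
    { eapply Rle_trans; [apply Rabs_triang|]. rewrite Rabs_Ropp, Rabs_mult, Rabs_R1.
      pose proof (Rabs_pos r). pose proof (Rabs_pos zd). nra. }
    assert (hA : 2 * Rabs zd * Rabs (H r) <= 2 * Z1 * X).
    { pose proof (Rabs_pos zd). pose proof (Rabs_pos (H r)). nra. }
    assert (hB : Rabs (Derive H r) * Rabs (1 - r * zd) <= (1 + Z1) * X).
    { pose proof (Rabs_pos (Derive H r)). pose proof (Rabs_pos r).
      apply Rle_trans with (Rabs (Derive H r) * ((1 + Z1) * (1 + Rabs r))).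
      apply Rmult_le_compat_l; auto. nra. }
    lra. }
  rewrite Rabs_mult, Rabs_inv, <- RPow_abs, (Rabs_pos_eq zy) by lra.
  assert (hz3 : dl^3 <= zy^3) by (apply pow_incr; lra).
  assert (hd3 : 0 < dl^3) by (apply pow_lt; lra).
  assert (hX0 : 0 <= X) by (unfold X; apply Rmult_le_pos; auto; left; apply Rinv_0_lt_compat; nra).
  apply Rle_trans with (/ dl^3 * ((3 * Z1 + 1) * (B * (1 + Z^2) / (1 + s^2)))).
  - apply Rmult_le_compat. left; apply Rinv_0_lt_compat; nra. apply Rabs_pos.
    apply Rinv_le_contravar; auto. eapply Rle_trans; [exact inner|].
    apply Rmult_le_compat_l; lra.
  - right. assert (0 < 1 + s^2) by nra. field. split; lra.
Qed.


Lemma RInt_scal_R (g : R -> R) l a b : ex_RInt g a b ->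
  RInt (fun x => l * g x) a b = l * RInt g a b.
Proof. intros H. exact (RInt_scal g a b l H). Qed.

Lemma RInt_minus_R (f g : R -> R) a b : ex_RInt f a b -> ex_RInt g a b ->
  RInt (fun x => f x - g x) a b = RInt f a b - RInt g a b.
Proof. intros H1 H2. exact (RInt_minus f g a b H1 H2). Qed.

Lemma ex_RInt_minus_R (f g : R -> R) a b : ex_RInt f a b -> ex_RInt g a b ->
  ex_RInt (fun x => f x - g x) a b.
Proof. intros H1 H2. exact (ex_RInt_minus f g a b H1 H2). Qed.

Lemma RInt_lin_R (f : R -> R) l b : (forall a b, ex_RInt f a b) ->
  RInt (fun s => l * f (l * s)) 0 b = RInt f 0 (l * b).
Proof.
  intros Hf. assert (E := RInt_comp_lin f l 0 0 b).
  replace (l * 0 + 0) with 0 in E by ring. replace (l * b + 0) with (l * b) in E by ring.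
  rewrite <- E by auto. apply RInt_ext. intros s _. change (l * f (l * s) = l * f (l * s + 0)).
  replace (l * s + 0) with (l * s) by ring. reflexivity.
Qed.

Lemma lim_scal {T} (F : (T -> Prop) -> Prop) {FF : Filter F} (g : T -> R) a l :
  filterlim g F (locally l) -> filterlim (fun x => a * g x) F (locally (a * l)).
Proof.
  intros Hg.
  apply (filterlim_comp_2 (F := F) (G := locally a) (H := locally l) (fun _ => a) g (fun x y => mult x y)).
  apply filterlim_const. exact Hg. apply (filterlim_mult (K := R_AbsRing) a l).
Qed.

Lemma lim_plus {T} (F : (T -> Prop) -> Prop) {FF : Filter F} (f g : T -> R) a b :
  filterlim f F (locally a) -> filterlim g F (locally b) ->
  filterlim (fun x => f x + g x) F (locally (a + b)).
Proof.
  intros Hf Hg.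
  apply (filterlim_comp_2 (F := F) (G := locally a) (H := locally b) f g (fun x y => plus x y)); auto.
  apply (filterlim_plus (K := R_AbsRing) a b).
Qed.

Lemma lim_mult {T} (F : (T -> Prop) -> Prop) {FF : Filter F} (f g : T -> R) a b :
  filterlim f F (locally a) -> filterlim g F (locally b) ->
  filterlim (fun x => f x * g x) F (locally (a * b)).
Proof.
  intros Hf Hg.
  apply (filterlim_comp_2 (F := F) (G := locally a) (H := locally b) f g (fun x y => mult x y)); auto.
  apply (filterlim_mult (K := R_AbsRing) a b).
Qed.

Lemma cont_max0 tau : continuity_pt (fun t => Rmax 0 t) tau.
Proof.
  apply continuity_pt_ext with (f := fun t => (t + Rabs t) / 2).
  { intros t. unfold Rmax. destruct (Rle_dec 0 t).
    - rewrite Rabs_pos_eq; auto. field.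
    - rewrite Rabs_left by lra. field. }
  apply continuity_pt_mult.
  - apply continuity_pt_plus. apply continuity_pt_id. apply Rcontinuity_abs.
  - apply continuity_pt_const. intros ? ?; auto.
Qed.

Lemma cont_1_of_2 (F : R -> R -> R) (g1 g2 : R -> R) s :
  continuity_2d_pt F (g1 s) (g2 s) -> continuity_pt g1 s -> continuity_pt g2 s ->
  continuity_pt (fun s => F (g1 s) (g2 s)) s.
Proof.
  intros HF H1 H2.
  apply (cont2_sec1 (fun a b => F (g1 a) (g2 a)) s 0).
  apply (cont2_comp F (fun a b => g1 a) (fun a b => g2 a)); auto;
  apply cont2_1d_1; auto.
Qed.

Lemma at_left_le x : filter_le (at_left x) (locally x).
Proof. intros P HP. unfold at_left, within. apply (filter_imp P); auto. Qed.

Lemma at_right_le x : filter_le (at_right x) (locally x).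
Proof. intros P HP. unfold at_right, within. apply (filter_imp P); auto. Qed.

Lemma cont_lim_left (f : R -> R) x : continuity_pt f x -> filterlim f (at_left x) (locally (f x)).
Proof.
  intros H. apply continuity_pt_filterlim in H.
  exact (filterlim_filter_le_1 _ (at_left_le x) H).
Qed.

Lemma cont_lim_right (f : R -> R) x : continuity_pt f x -> filterlim f (at_right x) (locally (f x)).
Proof.
  intros H. apply continuity_pt_filterlim in H.
  exact (filterlim_filter_le_1 _ (at_right_le x) H).
Qed.

Lemma exp_le_mono x y : x <= y -> exp x <= exp y.
Proof. intros [h|h]; [left; apply exp_increasing; auto| subst; lra]. Qed.

Lemma div_1sq X a : 0 <= X -> 1 <= a -> X / (1 + a^2) <= X / a.
Proof.
  intros HX Ha. unfold Rdiv. apply Rmult_le_compat_l; auto.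
  apply Rinv_le_contravar; nra.
Qed.

Lemma div_mono X a b : 0 <= X -> 1 <= a <= b -> X / b <= X / a.
Proof.
  intros HX Ha. unfold Rdiv. apply Rmult_le_compat_l; auto.
  apply Rinv_le_contravar; lra.
Qed.

Lemma lim_minus {T} (F : (T -> Prop) -> Prop) {FF : Filter F} (f g : T -> R) a b :
  filterlim f F (locally a) -> filterlim g F (locally b) ->
  filterlim (fun x => f x - g x) F (locally (a - b)).
Proof.
  intros Hf Hg.
  apply (filterlim_ext (fun x => f x + (-1) * g x)). { intros; ring. }
  replace (a - b) with (a + (-1) * b) by ring.
  apply lim_plus; auto. apply lim_scal; auto.
Qed.

Ltac req := match goal with |- ?a = ?b => change (@eq R a b) end.


Theorem theorem2
  (H zeta psi0 : R -> R) (delta_m : R) (u : R -> R -> R) (pts : list R)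
  (* kernel H *)
  (H_smooth : smooth H)
  (H_bdd : bdd_fun H)
  (H_even : forall s, H (- s) = H s)
  (H_nonneg : forall s, 0 <= H s)
  (H_moment : is_RInt_gen (fun s => s * H s) (at_point 0) (Rbar_locally p_infty) 1)
  (H_decay :
     (exists L, forall s, L < Rabs s -> H s = 0) \/
     (forall (n m : nat), exists C, forall s, Rabs (s ^ m * Derive_n H n s) <= C))
  (* horizon zeta *)
  (zeta_bdd : bdd_fun zeta)
  (zeta_smooth : smooth zeta)
  (zeta'_bdd : bdd_fun (Derive zeta))
  (delta_pos : 0 < delta_m)
  (zeta_ge : forall x, delta_m <= zeta x)
  (zeta_min : exists x0, zeta x0 = delta_m)
  (* initial datum psi0 *)
  (psi0_cont : forall x, continuous psi0 x)
  (psi0_bdd : bdd_fun psi0)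
  (psi0_smooth : forall n x, ~ In x pts -> ex_derive_n psi0 n x)
  (psi0'_bdd : exists M, forall x, ~ In x pts -> Rabs (Derive psi0 x) <= M)
  (psi0'_jumps : forall x, exists j, is_jump (Derive psi0) x j)
  (* u is the (bounded, continuous) solution *)
  (u_cont : forall x t, 0 <= t -> continuous (fun p : R * R => u (fst p) (snd p)) (x, t))
  (u_bdd : exists M, forall x t, 0 <= t -> Rabs (u x t) <= M)
  (u_init : forall x, u x 0 = psi0 x)
  (u_eq : forall x t, 0 < t ->
     ex_RInt_gen (fun s => (u x t - u (x - s) t) * gamma H zeta s x)
       (at_point 0) (Rbar_locally p_infty) /\
     is_derive (fun tau => u x tau) t
       (- int0inf (fun s => (u x t - u (x - s) t) * gamma H zeta s x))) :
  forall x t, 0 <= t -> forall j, is_jump (Derive psi0) x j ->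
    is_jump (fun y => Derive (fun z => u z t) y) x (exp (- kfun H zeta x * t) * j)
    /\ is_jump (fun y => Derive (fun z => u z 0) y) x j.
Proof.
  intros x t Ht j Hj.
  assert (Hj0 : is_jump (fun y => Derive (fun z => u z 0) y) x j).
  { destruct Hj as [l [r [Hl [Hr Hjr]]]]. exists l, r. split; [|split]; auto.
    - eapply filterlim_ext; [|exact Hl]. intros y. apply Derive_ext. intros; symmetry; apply u_init.
    - eapply filterlim_ext; [|exact Hr]. intros y. apply Derive_ext. intros; symmetry; apply u_init. }
  split; [|exact Hj0].
  destruct (Req_dec t 0) as [Ht0|Ht0].
  { subst t. replace (exp (- kfun H zeta x * 0) * j) with j by (rewrite Rmult_0_r, exp_0; ring). exact Hj0. }
  assert (Htp : 0 < t) by lra. clear Ht Ht0.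
  destruct (H_bounds H H_smooth H_bdd H_decay) as [B [HB0 HB]].
  destruct zeta_bdd as [Z HZ]. destruct zeta'_bdd as [Z1 HZ1]. destruct u_bdd as [M HM].
  assert (zpos : forall y, 0 < zeta y) by (intros y; specialize (zeta_ge y); lra).
  assert (zb : forall y, delta_m <= zeta y <= Z).
  { intros y; split; auto. eapply Rle_trans; [apply Rle_abs|apply HZ]. }
  assert (M0 : 0 <= M) by (eapply Rle_trans; [apply Rabs_pos | apply (HM 0 0 (Rle_refl 0))]).
  assert (Z10 : 0 <= Z1) by (eapply Rle_trans; [apply Rabs_pos|apply (HZ1 0)]).
  set (Bg := B * (1 + Z^2) / delta_m^2).
  assert (Hg : forall s y, Rabs (gamma H zeta s y) <= Bg / (1 + s^2)).
  { intros s y. apply (gam_bound H zeta B delta_m Z); auto; [intros; apply HB|lra]. }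
  assert (Bg0 : 0 <= Bg).
  { unfold Bg. apply Rmult_le_pos; [apply Rmult_le_pos; nra| left; apply Rinv_0_lt_compat; nra]. }
  set (BG := (3 * Z1 + 1) * (B * (1 + Z^2)) / delta_m^3).
  assert (HG : forall y s, Rabs (G1 H zeta y s) <= BG / (1 + s^2)).
  { intros y s. apply (G1_bound H zeta B delta_m Z Z1); auto; lra. }
  assert (BG0 : 0 <= BG).
  { unfold BG. apply Rmult_le_pos; [apply Rmult_le_pos; nra| left; apply Rinv_0_lt_compat; apply pow_lt; lra]. }
  assert (Hg1 : forall s y, Rabs (gamma H zeta s y) <= Bg).
  { intros s y. eapply Rle_trans; [apply Hg|]. apply Rmult_le_reg_r with (1 + s^2); [nra|].
    unfold Rdiv. rewrite Rmult_assoc, Rinv_l by nra. nra. }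
  assert (HG1 : forall y s, Rabs (G1 H zeta y s) <= BG).
  { intros y s. eapply Rle_trans; [apply HG|]. apply Rmult_le_reg_r with (1 + s^2); [nra|].
    unfold Rdiv. rewrite Rmult_assoc, Rinv_l by nra. nra. }
  assert (Hgc := gamma_cont H zeta H_smooth zeta_smooth zpos).
  assert (HGc := G1_cont H zeta H_smooth zeta_smooth zpos).
  assert (HHc : forall r, continuity_pt H r) by (apply smooth_cont; auto).
  assert (HHex : forall a b, ex_RInt H a b) by (intros; apply ex_RInt_cont; auto).
  destruct (ex_lim_decay H B HHex (fun s _ => proj1 (HB s))) as [c Hcl].
  assert (HKl : forall y, filterlim (fun b => RInt (fun s => gamma H zeta s y) 0 b)
                 (Rbar_locally p_infty) (locally (c / zeta y))).
  { intros y.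
    assert (hz := zpos y).
    apply (filterlim_ext (fun b => / zeta y * RInt H 0 (/ zeta y * b))).
    { intros b. rewrite <- RInt_lin_R by auto. rewrite <- RInt_scal_R.
      - apply RInt_ext. intros s _. unfold gamma. unfold Rdiv. simpl. field_simplify_eq; [|lra].
        replace (s * / zeta y) with (/ zeta y * s) by ring. ring.
      - apply ex_RInt_cont. intros z _. apply continuity_pt_mult.
        apply continuity_pt_const; intros ? ?; auto.
        apply (cont_1_of_2 (fun a b => H a) (fun s => / zeta y * s) (fun s => 0)).
        apply cont2_1d_1; auto. apply continuity_pt_mult. apply continuity_pt_const; intros ? ?; auto.
        apply continuity_pt_id. apply continuity_pt_const; intros ? ?; auto. }
    replace (c / zeta y) with (/ zeta y * c) by (field; lra).
    apply (@lim_scal R (Rbar_locally p_infty) _).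
    eapply filterlim_comp; [|exact Hcl].
    intros P [N HN]. exists (N * zeta y). intros b Hb. apply HN.
    apply Rmult_lt_reg_l with (zeta y); auto. rewrite <- Rmult_assoc, Rinv_r by lra. lra. }
  assert (HK : forall y, kfun H zeta y = c / zeta y).
  { intros y. unfold kfun, int0inf. apply is_RInt_gen_unique. apply is_RInt_gen_of_lim; auto.
    intros b. apply ex_RInt_cont. intros s _.
    apply (cont_1_of_2 (fun a s => gamma H zeta s a) (fun _ => y) (fun s => s)); auto.
    apply continuity_pt_const; intros ? ?; auto. apply continuity_pt_id. }
  set (Kf := fun y => kfun H zeta y).
  set (Kd := fun y => - c * Derive zeta y / (zeta y)^2).
  assert (HKd : forall y, is_derive Kf y (Kd y)).
  { intros y. apply (is_derive_ext (fun y => c / zeta y)). { intros; unfold Kf; rewrite HK; auto. }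
    assert (hz := zpos y). unfold Kd. auto_derive.
    - split; [apply smooth_derive; auto|lra].
    - change (Derive (fun x => zeta x)) with (Derive zeta). field. lra. }
  assert (HKc : forall y, continuity_pt Kf y).
  { intros y. apply exd_cont. eexists; apply HKd. }
  assert (HKdc : forall y, continuity_pt Kd y).
  { intros y. unfold Kd. apply continuity_pt_mult. apply continuity_pt_mult.
    apply continuity_pt_const; intros ? ?; auto. apply smooth_cont'; auto.
    apply continuity_pt_inv. apply continuity_pt_mult. apply smooth_cont; auto.
    apply continuity_pt_mult. apply smooth_cont; auto. apply continuity_pt_const; intros ? ?; auto.
    specialize (zpos y). apply pow_nonzero; lra. }
  set (Kmax := Rabs c / delta_m).
  assert (HKb : forall y, Rabs (Kf y) <= Kmax).
  { intros y. unfold Kf. rewrite HK. unfold Rdiv. rewrite Rabs_mult, Rabs_inv.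
    rewrite (Rabs_pos_eq (zeta y)) by (left; auto). unfold Kmax, Rdiv.
    apply Rmult_le_compat_l. apply Rabs_pos. apply Rinv_le_contravar; auto. }
  set (K1 := Rabs c * Z1 / delta_m^2).
  assert (HK1 : forall y, Rabs (Kd y) <= K1).
  { intros y. unfold Kd, K1. unfold Rdiv. rewrite !Rabs_mult, Rabs_inv, <- RPow_abs.
    rewrite Rabs_Ropp. rewrite (Rabs_pos_eq (zeta y)) by (left; auto).
    apply Rmult_le_compat. apply Rmult_le_pos; apply Rabs_pos. left; apply Rinv_0_lt_compat.
    apply pow_lt; auto. apply Rmult_le_compat_l. apply Rabs_pos. apply HZ1.
    apply Rinv_le_contravar. apply pow_lt; lra. apply pow_incr. split; [lra|apply zb]. }

  set (ut := fun z tau => u z (Rmax 0 tau)).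
  assert (Hut : forall z tau, continuity_2d_pt ut z tau).
  { intros z tau. unfold ut.
    apply (cont2_comp u (fun a b => a) (fun a b => Rmax 0 b)).
    - apply continuity_2d_pt_filterlim. apply u_cont. apply Rmax_l.
    - apply continuity_2d_pt_id1.
    - apply cont2_1d_2. apply cont_max0. }
  assert (HutM : forall z tau, Rabs (ut z tau) <= M).
  { intros z tau. apply HM. apply Rmax_l. }
  assert (Hutc1 : forall tau z, continuity_pt (fun z => ut z tau) z).
  { intros tau z. apply (cont2_sec1 ut). auto. }
  assert (Hut_pos : forall z tau, 0 <= tau -> ut z tau = u z tau).
  { intros z tau h. unfold ut. rewrite Rmax_right; auto. }
  set (Nn := fun n : nat => INR n + 1).
  assert (HNn : forall n, 1 <= Nn n) by (intros n; unfold Nn; pose proof (pos_INR n); lra).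
  set (Ln := fun n y tau => RInt (fun s => ut (y - s) tau * gamma H zeta s y) 0 (Nn n)).
  set (Pn := fun n y tau => RInt (fun s => ut (y - s) tau * G1 H zeta y s) 0 (Nn n)).
  set (dLn := fun n y tau => Pn n y tau + ut y tau * gamma H zeta 0 y - ut (y - Nn n) tau * gamma H zeta (Nn n) y).
  set (Dn := fun n y tau => exp (Kf y * tau) * (Kd y * tau * Ln n y tau + dLn n y tau)).
  set (fV := fun n y tau => exp (Kf y * tau) * Ln n y tau).
  set (Vn := fun n y => RInt (fun tau => fV n y tau) 0 t).
  set (Vdn := fun n y => RInt (fun tau => Dn n y tau) 0 t).
  set (V := fun y => exp (Kf y * t) * u y t - psi0 y).
  assert (Hconv_ex : forall (k : R -> R -> R), (forall a s, continuity_2d_pt k a s) ->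
            forall y tau a b, ex_RInt (fun s => ut (y - s) tau * k y s) a b).
  { intros k Hk y tau a b. apply ex_RInt_cont. intros s _.
    apply continuity_pt_mult.
    - apply (cont_1_of_2 ut (fun s => y - s) (fun _ => tau)); auto.
      apply continuity_pt_minus. apply continuity_pt_const; intros ? ?; auto. apply continuity_pt_id.
      apply continuity_pt_const; intros ? ?; auto.
    - apply (cont_1_of_2 k (fun _ => y) (fun s => s)); auto.
      apply continuity_pt_const; intros ? ?; auto. apply continuity_pt_id. }
  assert (Hconv_c : forall (k : R -> R -> R) Kb, (forall a s, continuity_2d_pt k a s) ->
            (forall a s, Rabs (k a s) <= Kb) -> forall A y tau, 0 <= A ->
            continuity_2d_pt (fun y tau => RInt (fun s => ut (y - s) tau * k y s) 0 A) y tau).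
  { intros k Kb Hk HKb' A y tau HA.
    apply (RInt_cont2 (fun p q s => ut (p - s) q * k p s));
      [lra| intros p q; apply Hconv_ex; auto| apply (UC_conv ut k M Kb); auto]. }
  assert (HLc : forall n y tau, continuity_2d_pt (Ln n) y tau).
  { intros n y tau. unfold Ln.
    apply (Hconv_c (fun a s => gamma H zeta s a) Bg); auto. pose proof (HNn n); lra. }
  assert (HPc : forall n y tau, continuity_2d_pt (Pn n) y tau).
  { intros n y tau. unfold Pn.
    apply (Hconv_c (G1 H zeta) BG); auto. pose proof (HNn n); lra. }
  assert (Hc2_ut_shift : forall N y tau, continuity_2d_pt (fun y tau => ut (y - N) tau) y tau).
  { intros N y tau. apply (cont2_comp ut (fun a b => a - N) (fun a b => b)); auto.
    apply continuity_2d_pt_minus. apply continuity_2d_pt_id1. apply continuity_2d_pt_const.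
    apply continuity_2d_pt_id2. }
  assert (Hgam_y : forall s y tau, continuity_2d_pt (fun y tau => gamma H zeta s y) y tau).
  { intros s y tau. apply (cont2_comp (fun a s => gamma H zeta s a) (fun a b => a) (fun a b => s)); auto.
    apply continuity_2d_pt_id1. apply continuity_2d_pt_const. }
  assert (HdLc : forall n y tau, continuity_2d_pt (dLn n) y tau).
  { intros n y tau. unfold dLn.
    apply continuity_2d_pt_minus. apply continuity_2d_pt_plus. auto.
    apply continuity_2d_pt_mult; auto.
    apply continuity_2d_pt_mult; auto. }
  assert (Hexp : forall y tau, continuity_2d_pt (fun y tau => exp (Kf y * tau)) y tau).
  { intros y tau. apply (continuity_1d_2d_pt_comp exp (fun y tau => Kf y * tau)).
    apply exd_cont; eexists; apply is_derive_exp. apply continuity_2d_pt_mult. apply cont2_1d_1; auto.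
    apply continuity_2d_pt_id2. }
  assert (HDc : forall n y tau, continuity_2d_pt (Dn n) y tau).
  { intros n y tau. unfold Dn. apply continuity_2d_pt_mult; auto.
    apply continuity_2d_pt_plus; auto. apply continuity_2d_pt_mult; auto.
    apply continuity_2d_pt_mult; auto. apply cont2_1d_1; auto. apply continuity_2d_pt_id2. }
  assert (HfVc : forall n y tau, continuity_2d_pt (fV n) y tau).
  { intros n y tau. unfold fV. apply continuity_2d_pt_mult; auto. }
  assert (HLd : forall n y tau, is_derive (fun y => Ln n y tau) y (dLn n y tau)).
  { intros n y tau. unfold Ln, dLn, Pn.
    apply (derive_conv (fun z => ut z tau) (fun a s => gamma H zeta s a) (G1 H zeta)); auto.
    apply gam_derive; auto. }
  assert (HfVd : forall n y tau, is_derive (fun y => fV n y tau) y (Dn n y tau)).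
  { intros n y tau. unfold fV, Dn.
    auto_derive.
    - split; [eexists; apply HKd|]. split; [eexists; apply HLd|]. auto.
    - change (Derive (fun x => Kf x)) with (Derive Kf). rewrite (is_derive_unique _ _ _ (HKd y)).
      replace (Derive (fun x : R => Ln n x tau) y) with (dLn n y tau)
        by (symmetry; apply is_derive_unique; apply HLd). ring. }
  assert (HVd : forall n y, is_derive (Vn n) y (Vdn n y)).
  { intros n y. unfold Vn, Vdn.
    eapply is_derive_eq.
    apply (is_derive_RInt_param (fV n) 0 t y).
    - apply filter_forall. intros y' tau _. eexists; apply HfVd.
    - intros tau _. apply continuity_2d_pt_ext with (f := Dn n).
      { intros; symmetry; apply is_derive_unique; apply HfVd. } apply HDc.
    - apply filter_forall. intros y'. apply ex_RInt_cont. intros; apply (cont2_sec2 (fV n)); auto.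
    - apply RInt_ext. intros; apply is_derive_unique; apply HfVd. }
  assert (HVdc : forall n y, continuity_pt (Vdn n) y).
  { intros n y. unfold Vdn. apply (RInt_cont1 (Dn n)); auto; lra. }
  set (E := exp (Kmax * t)).
  assert (HexpB : forall y tau, 0 <= tau <= t -> Rabs (exp (Kf y * tau)) <= E).
  { intros y tau Htau. rewrite Rabs_pos_eq by (left; apply exp_pos). unfold E.
    apply exp_le_mono. pose proof (HKb y). pose proof (Rle_abs (Kf y)).
    assert (Kf y * tau <= Rabs (Kf y) * tau) by (apply Rmult_le_compat_r; lra).
    assert (Rabs (Kf y) * tau <= Kmax * t) by (apply Rmult_le_compat; try lra; apply Rabs_pos). lra. }
  assert (E0 : 0 <= E) by (left; apply exp_pos).
  assert (Hconv_tail : forall (k : R -> R -> R) Kb, (forall a s, continuity_2d_pt k a s) ->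
            (forall a s, Rabs (k a s) <= Kb / (1 + s^2)) -> 0 <= Kb ->
            forall n m y tau, (n <= m)%nat ->
            Rabs (RInt (fun s => ut (y - s) tau * k y s) 0 (Nn n)
                  - RInt (fun s => ut (y - s) tau * k y s) 0 (Nn m)) <= M * Kb / Nn n).
  { intros k Kb Hk HKb' Kb0 n m y tau Hnm.
    rewrite Rabs_minus_sym, RInt_diff by (intros; apply Hconv_ex; auto).
    apply tail_bound.
    - split; auto. unfold Nn. apply le_INR in Hnm. lra.
    - apply Hconv_ex; auto.
    - intros s _. rewrite Rabs_mult. unfold Rdiv. rewrite Rmult_assoc.
      apply Rmult_le_compat; try apply Rabs_pos; auto. }
  assert (HLdiff : forall n m y tau, (n <= m)%nat -> Rabs (Ln n y tau - Ln m y tau) <= M * Bg / Nn n).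
  { intros. unfold Ln. apply (Hconv_tail (fun a s => gamma H zeta s a)); auto. }
  assert (HPdiff : forall n m y tau, (n <= m)%nat -> Rabs (Pn n y tau - Pn m y tau) <= M * BG / Nn n).
  { intros. unfold Pn. apply (Hconv_tail (G1 H zeta)); auto. }
  assert (Hbd : forall N y tau, 1 <= N -> Rabs (ut (y - N) tau * gamma H zeta N y) <= M * Bg / N).
  { intros N y tau HN. rewrite Rabs_mult.
    apply Rle_trans with (M * (Bg / (1 + N^2))).
    - apply Rmult_le_compat; try apply Rabs_pos; auto.
    - unfold Rdiv. rewrite <- Rmult_assoc. apply div_1sq; auto. apply Rmult_le_pos; auto. }
  set (Cd := E * (K1 * t * (M * Bg) + (M * BG + 2 * (M * Bg)))).
  assert (MBg0 : 0 <= M * Bg) by (apply Rmult_le_pos; auto).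
  assert (MBG0 : 0 <= M * BG) by (apply Rmult_le_pos; auto).
  assert (K10 : 0 <= K1) by (eapply Rle_trans; [apply Rabs_pos|apply (HK1 0)]).
  assert (HDdiff : forall n m y tau, (n <= m)%nat -> 0 <= tau <= t ->
            Rabs (Dn n y tau - Dn m y tau) <= Cd / Nn n).
  { intros n m y tau Hnm Htau.
    assert (hN : 1 <= Nn n <= Nn m) by (split; auto; unfold Nn; apply le_INR in Hnm; lra).
    assert (e : Dn n y tau - Dn m y tau = exp (Kf y * tau) *
        (Kd y * tau * (Ln n y tau - Ln m y tau) + ((Pn n y tau - Pn m y tau)
          - ut (y - Nn n) tau * gamma H zeta (Nn n) y + ut (y - Nn m) tau * gamma H zeta (Nn m) y))).
    { unfold Dn, dLn. ring. }
    rewrite e, Rabs_mult.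
    apply Rle_trans with (E * ((K1 * t * (M * Bg) + (M * BG + 2 * (M * Bg))) / Nn n));
      [|right; unfold Cd; field; lra].
    apply Rmult_le_compat; [apply Rabs_pos|apply Rabs_pos|apply HexpB; auto|].
    unfold Rdiv.
    eapply Rle_trans; [apply Rabs_triang|].
    rewrite Rmult_plus_distr_r.
    apply Rplus_le_compat.
    - assert (hL := HLdiff n m y tau Hnm).
      apply Rle_trans with (K1 * t * (M * Bg / Nn n)).
      { rewrite !Rabs_mult, (Rabs_pos_eq tau) by lra. apply Rmult_le_compat.
        apply Rmult_le_pos; [apply Rabs_pos|lra]. apply Rabs_pos.
        apply Rmult_le_compat; try lra; [apply Rabs_pos|apply HK1]. exact hL. }
      right; unfold Rdiv; ring.
    - eapply Rle_trans; [apply Rabs_triang|].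
      eapply Rle_trans; [apply Rplus_le_compat; [apply Rabs_triang|apply Rle_refl]|].
      rewrite Rabs_Ropp.
      assert (h1 := HPdiff n m y tau Hnm).
      assert (h2 := Hbd (Nn n) y tau (proj1 hN)).
      assert (h3 := Hbd (Nn m) y tau ltac:(lra)).
      assert (h4 : M * Bg / Nn m <= M * Bg / Nn n) by (apply div_mono; auto).
      unfold Rdiv in *. lra. }
  assert (Cd0 : 0 <= Cd).
  { unfold Cd. apply Rmult_le_pos; auto.
    assert (0 <= K1 * t * (M * Bg)) by (apply Rmult_le_pos; auto; apply Rmult_le_pos; lra). lra. }
  assert (HVddiff : forall n m y, (n <= m)%nat -> Rabs (Vdn n y - Vdn m y) <= t * Cd / (INR n + 1)).
  { intros n m y Hnm. unfold Vdn.
    assert (hex : forall k, ex_RInt (fun tau => Dn k y tau) 0 t).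
    { intros k. apply ex_RInt_cont. intros; apply (cont2_sec2 (Dn k)); auto. }
    rewrite <- RInt_minus_R by auto.
    eapply Rle_trans. apply (RInt_abs_const _ 0 t (Cd / Nn n)); try lra.
    apply ex_RInt_minus_R; auto.
    intros s Hs. apply HDdiff; auto.
    right. unfold Nn. field. pose proof (pos_INR n). lra. }
  assert (HLb : forall n y tau, 0 < tau ->
    Rabs (Kf y * u y tau - int0inf (fun s => (u y tau - u (y - s) tau) * gamma H zeta s y)
          - Ln n y tau) <= M * Bg / Nn n).
  { intros n y tau Htau.
    destruct (u_eq y tau Htau) as [hex _].
    set (F := fun s => (u y tau - u (y - s) tau) * gamma H zeta s y).
    assert (hI : filterlim (fun b => RInt F 0 b) (Rbar_locally p_infty) (locally (int0inf F))).
    { apply lim_of_is_RInt_gen. unfold int0inf. apply (RInt_gen_correct (V := R_CompleteNormedModule)).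
      exact hex. }
    assert (hK : filterlim (fun b => RInt (fun s => gamma H zeta s y) 0 b) (Rbar_locally p_infty)
                   (locally (Kf y))).
    { unfold Kf. rewrite HK. apply HKl. }
    assert (hexg : forall a b, ex_RInt (fun s => gamma H zeta s y) a b).
    { intros a b. apply ex_RInt_cont. intros s _.
      apply (cont_1_of_2 (fun a s => gamma H zeta s a) (fun _ => y) (fun s => s)); auto.
      apply continuity_pt_const; intros ? ?; auto. apply continuity_pt_id. }
    assert (hexu : forall a b, ex_RInt (fun s => ut (y - s) tau * gamma H zeta s y) a b).
    { intros; apply (Hconv_ex (fun a s => gamma H zeta s a)); auto. }
    assert (hexF : forall a b, ex_RInt F a b).
    { intros a b. apply (ex_RInt_ext (fun s => (ut y tau - ut (y - s) tau) * gamma H zeta s y)).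
      { intros s _. unfold F. rewrite !Hut_pos by lra. reflexivity. }
      apply (ex_RInt_ext (fun s => ut y tau * gamma H zeta s y - ut (y - s) tau * gamma H zeta s y)).
      { intros; req; ring. }
      apply ex_RInt_minus_R; auto.
      apply (ex_RInt_ext (fun s => ut y tau * gamma H zeta s y)); [intros; reflexivity|].
      exact (ex_RInt_scal (fun s => gamma H zeta s y) a b (ut y tau) (hexg a b)). }
    apply (lim_bound (fun b => u y tau * RInt (fun s => gamma H zeta s y) 0 b - RInt F 0 b - Ln n y tau)).
    - apply (@lim_minus R (Rbar_locally p_infty) _). apply (@lim_minus R (Rbar_locally p_infty) _).
      rewrite Rmult_comm. apply (@lim_scal R (Rbar_locally p_infty) _); auto. exact hI.
      apply filterlim_const.
    - exists (Nn n). intros b Hb.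
      assert (e : u y tau * RInt (fun s => gamma H zeta s y) 0 b - RInt F 0 b - Ln n y tau
                  = RInt (fun s => ut (y - s) tau * gamma H zeta s y) (Nn n) b).
      { rewrite <- (RInt_diff (fun s => ut (y - s) tau * gamma H zeta s y) (Nn n) b) by auto.
        unfold Ln.
        cut (u y tau * RInt (fun s => gamma H zeta s y) 0 b - RInt F 0 b
             = RInt (fun s => ut (y - s) tau * gamma H zeta s y) 0 b); [intros ->; reflexivity|].
        rewrite <- RInt_scal_R by auto. rewrite <- RInt_minus_R; auto.
        - apply RInt_ext. intros s _. unfold F. rewrite Hut_pos by lra. req; ring.
        - exact (ex_RInt_scal (fun s => gamma H zeta s y) 0 b (u y tau) (hexg 0 b)). }
      rewrite e. apply tail_bound; auto. split; auto. lra.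
      intros s _. rewrite Rabs_mult. unfold Rdiv. rewrite Rmult_assoc.
      apply Rmult_le_compat; try apply Rabs_pos; auto. }
  (* Duhamel comparison *)
  assert (HDuh : forall n y, Rabs (V y - Vn n y) <= t * (E * (M * Bg)) / (INR n + 1)).
  { intros n y.
    set (I := fun tau => int0inf (fun s => (u y tau - u (y - s) tau) * gamma H zeta s y)).
    set (Phi := fun tau => exp (Kf y * tau) * u y tau - psi0 y - RInt (fun s => fV n y s) 0 tau).
    set (df := fun tau => if Rlt_dec 0 tau then exp (Kf y * tau) * (Kf y * u y tau - I tau - Ln n y tau) else 0).
    assert (hfVc : forall s, continuity_pt (fun s => fV n y s) s).
    { intros; apply (cont2_sec2 (fV n)); auto. }
    assert (hRd : forall tau, is_derive (fun tau => RInt (fun s => fV n y s) 0 tau) tau (fV n y tau)).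
    { intros tau. apply (is_derive_RInt (fun s => fV n y s) (fun tau => RInt (fun s => fV n y s) 0 tau) 0 tau).
      - apply filter_forall. intros b. apply (RInt_correct (V := R_CompleteNormedModule)).
        apply ex_RInt_cont; auto.
      - apply cont_of_cont_pt; auto. }
    assert (hexpd : forall tau, is_derive (fun tau => exp (Kf y * tau)) tau (Kf y * exp (Kf y * tau))).
    { intros tau. auto_derive; auto. ring. }
    assert (hder : forall tau, 0 < tau < t -> is_derive Phi tau (df tau)).
    { intros tau Htau. unfold df. destruct (Rlt_dec 0 tau) as [_|h]; [|lra].
      destruct (u_eq y tau ltac:(lra)) as [_ hud].
      eapply is_derive_eq.
      - unfold Phi.
        apply (is_derive_minus (fun tau => exp (Kf y * tau) * u y tau - psi0 y) (fun tau => RInt (fun s => fV n y s) 0 tau)).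
        apply (is_derive_minus (fun tau => exp (Kf y * tau) * u y tau) (fun _ => psi0 y)).
        apply (is_derive_mult (fun tau => exp (Kf y * tau)) (fun tau => u y tau)).
        + apply hexpd.
        + exact hud.
        + intros; apply Rmult_comm.
        + apply is_derive_const.
        + apply hRd.
      - unfold I, fV. simpl. unfold minus, plus, opp, mult, zero. simpl. req. ring. }
    assert (hcont : forall tau, 0 <= tau <= t -> continuity_pt Phi tau).
    { intros tau Htau. unfold Phi. apply continuity_pt_minus. apply continuity_pt_minus.
      - apply continuity_pt_mult. apply exd_cont. eexists; apply hexpd.
        apply (cont2_sec2 u). apply continuity_2d_pt_filterlim. apply u_cont. lra.
      - apply continuity_pt_const; intros ? ?; auto.
      - apply exd_cont. eexists; apply hRd. }
    destruct (MVT_gen Phi 0 t df) as [cc [Hcc Heq]].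
    { intros z Hz. rewrite Rmin_left, Rmax_right in Hz by lra. apply hder; auto. }
    { intros z Hz. rewrite Rmin_left, Rmax_right in Hz by lra. apply hcont; auto. }
    rewrite Rmin_left, Rmax_right in Hcc by lra.
    assert (hP0 : Phi 0 = 0).
    { unfold Phi. rewrite Rmult_0_r, exp_0, u_init, RInt_point. unfold zero. simpl. ring. }
    assert (hPt : Phi t = V y - Vn n y) by (unfold Phi, V, Vn; ring).
    rewrite <- hPt. replace (Phi t) with (Phi t - Phi 0) by (rewrite hP0; ring).
    rewrite Heq. rewrite Rabs_mult, Rminus_0_r, (Rabs_pos_eq t) by lra.
    apply Rle_trans with (E * (M * Bg / Nn n) * t).
    - apply Rmult_le_compat_r; [lra|]. unfold df. destruct (Rlt_dec 0 cc) as [hc|hc].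
      + rewrite Rabs_mult. apply Rmult_le_compat; try apply Rabs_pos.
        apply HexpB; lra. apply HLb; auto.
      + rewrite Rabs_R0. apply Rmult_le_pos; auto. apply Rmult_le_pos; auto.
        left; apply Rinv_0_lt_compat; pose proof (HNn n); lra.
    - right. unfold Nn. field. pose proof (pos_INR n); lra. }
  assert (HVdnD : forall n y, Derive (Vn n) y = Vdn n y) by (intros; apply is_derive_unique; apply HVd).
  assert (Cv0 : 0 <= t * (E * (M * Bg))).
  { apply Rmult_le_pos; [lra|]. apply Rmult_le_pos; auto. }
  destruct (CVU_cauchy (fun n y => Derive (Vn n) y) (t * Cd)) as [CVd _].
  { intros n m y Hnm. rewrite !HVdnD. apply HVddiff; auto. }
  destruct (CVU_cauchy Vn (2 * (t * (E * (M * Bg))))) as [CV _].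
  { intros n m y Hnm.
    replace (Vn n y - Vn m y) with ((V y - Vn m y) - (V y - Vn n y)) by ring.
    eapply Rle_trans; [apply Rabs_triang|]. rewrite Rabs_Ropp.
    assert (h1 := HDuh n y). assert (h2 := HDuh m y).
    assert (h3 : t * (E * (M * Bg)) / (INR m + 1) <= t * (E * (M * Bg)) / (INR n + 1)).
    { apply div_mono; auto. split. pose proof (pos_INR n); lra. apply le_INR in Hnm; lra. }
    assert (e2 : 2 * (t * (E * (M * Bg))) / (INR n + 1) = t * (E * (M * Bg)) / (INR n + 1) + t * (E * (M * Bg)) / (INR n + 1))
      by (field; pose proof (pos_INR n); lra).
    rewrite e2. lra. }
  assert (HLimV : forall y, Lim_seq (fun n => Vn n y) = V y).
  { intros y. apply is_lim_seq_unique. apply is_lim_seq_spec. intros eps.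
    destruct (small_N (t * (E * (M * Bg))) eps Cv0 (cond_pos eps)) as [N HN].
    exists N. intros n Hn. rewrite Rabs_minus_sym. eapply Rle_lt_trans; [apply HDuh|].
    eapply Rle_lt_trans; [|exact HN]. apply div_mono; auto. split. pose proof (pos_INR N); lra.
    apply le_INR in Hn; lra. }
  set (G := fun y => real (Lim_seq (fun n => Derive (Vn n) y))).
  assert (HVder : forall y, is_derive V y (G y)).
  { intros y. apply (is_derive_ext (fun y => real (Lim_seq (fun n => Vn n y)))). { intros; rewrite HLimV; reflexivity. }
    apply (CVU_Derive Vn (fun _ => True)); auto.
    - apply open_true.
    - intros a0 b0 c0 _ _ _; auto.
    - intros n z _. eexists; apply HVd.
    - intros n z _. apply continuity_pt_ext with (f := Vdn n). { intros; symmetry; apply HVdnD. } apply HVdc. }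
  assert (HGlc : forall y, continuity_pt G y).
  { intros y. apply (CVU_cont_open (fun n y => Derive (Vn n) y) (fun _ => True)); auto.
    - apply open_true.
    - intros n z _. apply continuity_pt_ext with (f := Vdn n). { intros; symmetry; apply HVdnD. } apply HVdc. }
  assert (Hu_rep : forall y, u y t = exp (- Kf y * t) * (psi0 y + V y)).
  { intros y. unfold V. replace (psi0 y + (exp (Kf y * t) * u y t - psi0 y)) with (exp (Kf y * t) * u y t) by ring.
    rewrite <- Rmult_assoc, <- exp_plus. replace (- Kf y * t + Kf y * t) with 0 by ring. rewrite exp_0. ring. }
  assert (he : forall y, is_derive (fun z => exp (- Kf z * t)) y (exp (- Kf y * t) * (- Kd y * t))).
  { intros y. auto_derive. eexists; apply HKd.
    change (Derive (fun x => Kf x)) with (Derive Kf). rewrite (is_derive_unique _ _ _ (HKd y)). ring. }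
  assert (hec : forall y, continuity_pt (fun z => exp (- Kf z * t)) y).
  { intros y. apply exd_cont. eexists; apply he. }
  assert (hpsic : forall y, continuity_pt psi0 y).
  { intros y. apply continuity_pt_filterlim. apply psi0_cont. }
  assert (hVc : forall y, continuity_pt V y).
  { intros y. apply exd_cont. eexists; apply HVder. }
  set (Q := fun y => exp (- Kf y * t) * (G y - Kd y * t * (psi0 y + V y))).
  assert (HQc : forall y, continuity_pt Q y).
  { intros y. unfold Q. apply continuity_pt_mult; auto. apply continuity_pt_minus; auto.
    apply continuity_pt_mult. apply continuity_pt_mult; auto. apply continuity_pt_const; intros ? ?; auto.
    apply continuity_pt_plus; auto. }
  destruct (pts_avoid pts x) as [dp [Hdp Hpts]].
  assert (HDu : forall y, 0 < Rabs (y - x) < dp ->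
            Derive (fun z => u z t) y = exp (- Kf y * t) * Derive psi0 y + Q y).
  { intros y Hy. assert (hnot := Hpts y Hy).
    assert (hpd : ex_derive psi0 y) by exact (psi0_smooth 1%nat y hnot).
    rewrite (Derive_ext (fun z => u z t) (fun z => exp (- Kf z * t) * (psi0 z + V z))) by apply Hu_rep.
    apply is_derive_unique.
    destruct hpd as [dp0 hdp0]. rewrite (is_derive_unique _ _ _ hdp0).
    eapply is_derive_eq.
    apply (is_derive_mult (fun z => exp (- Kf z * t)) (fun z => psi0 z + V z));
      [exact (he y)| apply (is_derive_plus psi0 V); [exact hdp0|apply HVder] | intros; apply Rmult_comm].
    unfold Q. simpl. unfold plus, mult; simpl. req; ring. }
  destruct Hj as [l [r [Hl [Hr Hjr]]]].
  exists (exp (- Kf x * t) * l + Q x), (exp (- Kf x * t) * r + Q x). split; [|split].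
  - apply (filterlim_ext_loc (fun y => exp (- Kf y * t) * Derive psi0 y + Q y)).
    + unfold at_left, within. apply locally_R. exists dp. split; auto. intros y Hy Hyx.
      symmetry. apply HDu. split; auto. apply Rabs_pos_lt; lra.
    + apply (@lim_plus R (at_left x) _). apply (@lim_mult R (at_left x) _).
      apply (cont_lim_left (fun z => exp (- Kf z * t)) x); auto. exact Hl. apply (cont_lim_left Q x); auto.
  - apply (filterlim_ext_loc (fun y => exp (- Kf y * t) * Derive psi0 y + Q y)).
    + unfold at_right, within. apply locally_R. exists dp. split; auto. intros y Hy Hyx.
      symmetry. apply HDu. split; auto. apply Rabs_pos_lt; lra.
    + apply (@lim_plus R (at_right x) _). apply (@lim_mult R (at_right x) _).
      apply (cont_lim_right (fun z => exp (- Kf z * t)) x); auto. exact Hr. apply (cont_lim_right Q x); auto.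
  - rewrite Hjr. unfold Kf. ring.
Qed.
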